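(* The normalizer of $\operatorname{IET}^{+}$ in $\operatorname{IET}^{\bowtie}$ is $\operatorname{IET}^{\pm}$.
   Context: $X=[0,1[$. $\widehat{\operatorname{IET}^{\bowtie}}$ is the group of bijections $f:X\to X$ for which there is a finite partition of $X$ into intervals $[a,b[$ such that on each $]a,b[$, $f$ has the form $x\mapsto x+c$ or $x\mapsto -x+c$; $\widehat{\operatorname{IET}^{+}}$ is the subgroup of those for which only the form $x\mapsto x+c$ occurs. With ${\mathfrak S}_{\mathrm{fin}}$ the normal subgroup of finitely supported permutations, $\operatorname{IET}^{\bowtie}=\widehat{\operatorname{IET}^{\bowtie}}/{\mathfrak S}_{\mathrm{fin}}$ and $\operatorname{IET}^{+}=\widehat{\operatorname{IET}^{+}}/{\mathfrak S}_{\mathrm{fin}}$. Let $\mathcal R\in\operatorname{IET}^{\bowtie}$ be the class of any bijection of $X$ agreeing with $x\mapsto 1-x$ outside a finite set. Define $\operatorname{IET}^{-}=\mathcal R\cdot\operatorname{IET}^{+}$ and $\operatorname{IET}^{\pm}=\operatorname{IET}^{+}\cup\operatorname{IET}^{-}$ (a subgroup). *)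

(* Defs.v *)
From Stdlib Require Import Reals List.
Open Scope R_scope.

Definition X : Type := {x : R | 0 <= x < 1}.
Definition xval (x : X) : R := proj1_sig x.

Definition comp (f g : X -> X) : X -> X := fun x => f (g x).

Definition inverse_pair (f g : X -> X) : Prop :=
  (forall x, g (f x) = x) /\ (forall y, f (g y) = y).

Definition bijection (f : X -> X) : Prop := exists g, inverse_pair f g.

Definition piecewise_isometric (orientation_reversing_allowed : bool)
    (f : X -> X) : Prop :=
  exists (n : nat) (a : nat -> R),
    a 0%nat = 0 /\ a n = 1 /\
    (forall i, (i < n)%nat -> a i < a (S i)) /\
    (forall i, (i < n)%nat -> exists c : R,
        (forall x : X, a i < xval x < a (S i) -> xval (f x) = xval x + c)
        \/ (orientation_reversing_allowed = true /\
            forall x : X, a i < xval x < a (S i) -> xval (f x) = - xval x + c)).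

Definition IETbow_hat (f : X -> X) : Prop := bijection f /\ piecewise_isometric true f.
Definition IETplus_hat (f : X -> X) : Prop := bijection f /\ piecewise_isometric false f.

(* f and g agree outside a finite set, i.e. have the same class modulo S_fin *)
Definition eqfin (f g : X -> X) : Prop :=
  exists l : list X, forall x, ~ In x l -> f x = g x.

(* r is a representative of the class R: a bijection of X agreeing with
   x |-> 1 - x outside a finite set *)
Definition is_R_rep (r : X -> X) : Prop :=
  bijection r /\ exists l : list X, forall x, ~ In x l -> xval (r x) = 1 - xval x.

Definition in_IETplus (g : X -> X) : Prop :=
  exists h, IETplus_hat h /\ eqfin g h.

Definition in_IETminus (g : X -> X) : Prop :=
  exists r h, is_R_rep r /\ IETplus_hat h /\ eqfin g (comp r h).

Definition in_IETpm (g : X -> X) : Prop := in_IETplus g \/ in_IETminus g.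

(* the class of g (g in hat IET^bowtie) lies in the normalizer of IET^+ in
   IET^bowtie:  [g] IET^+ [g]^-1 = IET^+, i.e. both
   [g] IET^+ [g]^-1 <= IET^+ and [g]^-1 IET^+ [g] <= IET^+. *)
Definition in_normalizer_IETplus (g : X -> X) : Prop :=
  exists gi, inverse_pair g gi /\
    (forall h, IETplus_hat h -> in_IETplus (comp g (comp h gi))) /\
    (forall h, IETplus_hat h -> in_IETplus (comp gi (comp h g))).

(* Main.v *)
Require Import Defs.
From Stdlib Require Import Reals List Lra Lia Classical ProofIrrelevance.
Open Scope R_scope.
Notation compX := Defs.comp.

Lemma X_eq (x y : X) : xval x = xval y -> x = y.
Proof. destruct x as [x Hx], y as [y Hy]; unfold xval; simpl; intro E; subst.
  f_equal; apply proof_irrelevance. Qed.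

Lemma xb (x : X) : 0 <= xval x < 1.
Proof. exact (proj2_sig x). Qed.

Definition toX (z : R) : X :=
  match Rle_dec 0 z, Rlt_dec z 1 with
  | left H1, left H2 => exist _ z (conj H1 H2)
  | _, _ => exist _ 0 (conj (Rle_refl 0) Rlt_0_1)
  end.

Lemma toX_val z : 0 <= z < 1 -> xval (toX z) = z.
Proof. intros [H1 H2]; unfold toX; destruct (Rle_dec 0 z); destruct (Rlt_dec z 1);
  simpl; try contradiction; reflexivity. Qed.

Definition sgn (b : bool) : R := if b then 1 else -1.

Lemma sgn_eqb s1 s2 : sgn (Bool.eqb s1 s2) = sgn s1 * sgn s2.
Proof. destruct s1, s2; simpl; ring. Qed.

Definition gapS (s : bool) (f : X -> X) : Prop :=
  exists L : list R, forall u v, u < v -> (forall z, In z L -> ~ (u < z < v)) ->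
    exists c, forall x : X, u < xval x < v -> xval (f x) = sgn s * xval x + c.

Definition partS (s : bool) (f : X -> X) : Prop :=
  exists (n : nat) (a : nat -> R), a 0%nat = 0 /\ a n = 1 /\
    (forall i, (i < n)%nat -> a i < a (S i)) /\
    (forall i, (i < n)%nat -> exists c, forall x : X,
        a i < xval x < a (S i) -> xval (f x) = sgn s * xval x + c).

Lemma mono a n (H : forall i, (i < n)%nat -> a i < a (S i)) :
  forall j i, (i <= j)%nat -> (j <= n)%nat -> a i <= a j.
Proof. induction j; intros i Hij Hjn.
  - assert (i = 0%nat) by lia; subst; lra.
  - destruct (Nat.eq_dec i (S j)). subst; lra.
    assert (a i <= a j) by (apply IHj; lia). specialize (H j ltac:(lia)). lra. Qed.

Lemma locate a n (H0 : a 0%nat = 0) (H : forall i, (i < n)%nat -> a i < a (S i)) :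
  forall k, (k <= n)%nat -> forall y, 0 <= y -> y < a k ->
  exists i, (i < k)%nat /\ a i <= y < a (S i).
Proof. induction k; intros Hk y Hy Hyk.
  - lra.
  - destruct (Rle_lt_dec (a k) y).
    + exists k; split; [lia | lra].
    + destruct (IHk ltac:(lia) y Hy r) as [i [Hi Hy']]. exists i; split; [lia | auto]. Qed.

Lemma partS_gapS s f : partS s f -> gapS s f.
Proof.
  intros (n & a & H0 & Hn & Hinc & Hp). exists (map a (seq 0 (S n))).
  intros u v Huv Hgap.
  assert (Hin : forall i, (i <= n)%nat -> In (a i) (map a (seq 0 (S n)))).
  { intros; apply in_map; apply in_seq; lia. }
  destruct (classic (exists y : X, u < xval y < v)) as [[y Hy] | Hno].
  - destruct (xb y) as [Hy0 Hy1]. rewrite <- Hn in Hy1.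
    destruct (locate a n H0 Hinc n (le_n n) (xval y) Hy0 Hy1) as [i [Hi Hai]].
    assert (a i <= u).
    { destruct (Rle_lt_dec (a i) u); auto. exfalso; apply (Hgap (a i)); [apply Hin; lia | lra]. }
    assert (v <= a (S i)).
    { destruct (Rle_lt_dec v (a (S i))); auto. exfalso; apply (Hgap (a (S i))); [apply Hin; lia | lra]. }
    destruct (Hp i Hi) as [c Hc]. exists c. intros x Hx. apply Hc; lra.
  - exists 0. intros x Hx. exfalso; apply Hno; exists x; auto.
Qed.

Lemma gap_exists L : forall u v, u < v -> exists u' v', u <= u' /\ u' < v' /\ v' <= v /\
  forall z, In z L -> ~ (u' < z < v').
Proof.
  induction L as [|a L IH]; intros u v H.
  - exists u, v; repeat split; try lra. intros z [].
  - destruct (IH u v H) as (u1 & v1 & H1 & H2 & H3 & H4).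
    destruct (classic (u1 < a < v1)).
    + exists u1, a. repeat split; try lra. intros z [<- | Hz] Hz'. lra.
      apply (H4 z Hz); lra.
    + exists u1, v1. repeat split; try lra. intros z [<- | Hz]; auto.
Qed.

Lemma list_max (L : list R) (t : R) : (exists z, In z L /\ 0 < z < t) ->
  exists m, In m L /\ 0 < m < t /\ forall z, In z L -> 0 < z < t -> z <= m.
Proof.
  induction L as [|a L IH]; intros [z [Hz Hzt]]. destruct Hz.
  destruct (classic (exists z, In z L /\ 0 < z < t)) as [Hex | Hno].
  - destruct (IH Hex) as [m [Hm1 [Hm2 Hm3]]].
    destruct (classic (0 < a < t /\ m < a)) as [Ha | Ha].
    + exists a. split; [left; auto |]. split; [tauto |].
      intros z' [<- | Hz'] Hz't; [lra | specialize (Hm3 z' Hz' Hz't); lra].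
    + exists m. split; [right; auto |]. split; [auto |].
      intros z' [E | Hz'] Hz't.
      * subst a. destruct (Rle_lt_dec z' m); auto. exfalso; apply Ha; auto.
      * apply Hm3; auto.
  - exists a. destruct Hz as [<- | Hz]; [| exfalso; apply Hno; exists z; auto].
    split; [left; auto|]. split; [auto|].
    intros z' [<- | Hz'] Hz't; [lra | exfalso; apply Hno; exists z'; auto].
Qed.

Lemma gap_part_aux s f : forall N (L : list R), (length L <= N)%nat -> forall t, 0 < t ->
  (forall u v, 0 <= u -> u < v -> v <= t -> (forall z, In z L -> ~ (u < z < v)) ->
     exists c, forall x : X, u < xval x < v -> xval (f x) = sgn s * xval x + c) ->
  exists n a, a 0%nat = 0 /\ a n = t /\ (forall i, (i < n)%nat -> a i < a (S i)) /\
    (forall i, (i < n)%nat -> exists c, forall x : X,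
        a i < xval x < a (S i) -> xval (f x) = sgn s * xval x + c).
Proof.
  induction N; intros L HL t Ht Hg;
  (destruct (classic (exists z, In z L /\ 0 < z < t)) as [Hex | Hno];
   [ | exists 1%nat, (fun i => match i with O => 0 | _ => t end);
       split; [reflexivity|]; split; [reflexivity|]; split;
       [ intros i Hi; assert (i = 0%nat) by lia; subst; simpl; lra
       | intros i Hi; assert (i = 0%nat) by lia; subst; simpl;
         apply Hg; try lra; intros z Hz Hz'; apply Hno; exists z; split; auto ] ]).
  - destruct Hex as [z [Hz _]]. destruct L; [destruct Hz | simpl in HL; lia].
  - destruct (list_max L t Hex) as [m [Hm1 [Hm2 Hm3]]].
    set (L' := remove Req_dec_T m L).
    assert (HL' : (length L' <= N)%nat).
    { pose proof (remove_length_lt Req_dec_T L m Hm1). unfold L'. lia. }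
    destruct (IHN L' HL' m ltac:(lra)) as (n & a & H0 & Hn & Hinc & Hp).
    { intros u v Hu Huv Hv Hgap. apply Hg; try lra. intros z Hz Hz'.
      destruct (Req_dec_T z m). subst; lra.
      apply (Hgap z); [apply in_in_remove; auto | auto]. }
    set (a' := fun i => if Nat.leb i n then a i else t).
    assert (E1 : forall i, (i <= n)%nat -> a' i = a i).
    { intros i Hi; unfold a'; rewrite (proj2 (Nat.leb_le _ _) Hi); auto. }
    assert (E2 : a' (S n) = t).
    { unfold a'; rewrite (proj2 (Nat.leb_gt _ _) (Nat.lt_succ_diag_r n)); auto. }
    exists (S n), a'. split; [rewrite E1; auto; lia |]. split; [auto |]. split.
    + intros i Hi. destruct (Nat.eq_dec i n).
      * subst i. rewrite E1, E2; auto. lra.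
      * rewrite !E1; try lia. apply Hinc; lia.
    + intros i Hi. destruct (Nat.eq_dec i n).
      * subst i. rewrite E1, E2; auto. rewrite Hn. apply Hg; try lra.
        intros z Hz Hz'. specialize (Hm3 z Hz ltac:(lra)). lra.
      * rewrite !E1; try lia. apply Hp; lia.
Qed.

Lemma gapS_partS s f : gapS s f -> partS s f.
Proof.
  intros [L HL]. apply (gap_part_aux s f (length L) L (le_n _) 1 Rlt_0_1).
  intros u v _ Huv _ Hg. apply HL; auto.
Qed.

Lemma gapS_eqfin s f h : gapS s h -> eqfin f h -> gapS s f.
Proof.
  intros [L HL] [l Hl]. exists (L ++ map xval l). intros u v Huv Hgap.
  destruct (HL u v Huv) as [c Hc].
  { intros z Hz; apply Hgap; apply in_or_app; auto. }
  exists c. intros x Hx. rewrite Hl. apply Hc; auto.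
  intro Hin. apply (Hgap (xval x)); auto. apply in_or_app; right; apply in_map; auto.
Qed.

Lemma img_int (s : bool) (c u v : R) : u < v -> exists u' v', u' < v' /\
  (forall x, u < x < v -> u' < sgn s * x + c < v') /\
  (forall z, u' < z < v' -> u < sgn s * (z - c) < v) /\
  (forall z, sgn s * (sgn s * (z - c)) + c = z).
Proof.
  intro H; destruct s; simpl; [exists (u + c), (v + c) | exists (c - v), (c - u)];
  repeat split; intros; lra.
Qed.

Lemma gapS_comp s1 s2 k ki f : inverse_pair k ki -> gapS s1 k -> gapS s2 f ->
  gapS (Bool.eqb s1 s2) (compX f k).
Proof.
  intros [Hk1 Hk2] [Lk HLk] [Lf HLf].
  exists (0 :: 1 :: Lk ++ map (fun z => xval (ki (toX z))) Lf).
  intros u v Huv Hgap.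
  destruct (classic (exists y : X, u < xval y < v)) as [[y0 Hy0] | Hno];
    [ | exists 0; intros x Hx; exfalso; apply Hno; exists x; auto].
  assert (Hu : 0 <= u).
  { destruct (Rle_lt_dec 0 u); auto. exfalso; apply (Hgap 0); [left; auto | pose proof (xb y0); lra]. }
  assert (Hv : v <= 1).
  { destruct (Rle_lt_dec v 1); auto. exfalso; apply (Hgap 1); [right; left; auto | pose proof (xb y0); lra]. }
  destruct (HLk u v Huv) as [c1 Hc1].
  { intros z Hz; apply Hgap; right; right; apply in_or_app; auto. }
  destruct (img_int s1 c1 u v Huv) as (u' & v' & H1 & H2 & H3 & H4).
  destruct (HLf u' v' H1) as [c2 Hc2].
  { intros z Hz Hzin. specialize (H3 z Hzin).
    set (z0 := sgn s1 * (z - c1)) in *.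
    assert (Hz0 : xval (toX z0) = z0) by (apply toX_val; lra).
    assert (Hkz : xval (k (toX z0)) = z).
    { rewrite Hc1; rewrite Hz0; [unfold z0; apply H4 | lra]. }
    assert (E : k (toX z0) = toX z).
    { apply X_eq. rewrite toX_val; auto. rewrite <- Hkz; apply xb. }
    apply (Hgap z0).
    - right; right; apply in_or_app; right.
      replace z0 with (xval (ki (toX z))).
      + apply (in_map (fun z => xval (ki (toX z)))); auto.
      + rewrite <- E, Hk1; auto.
    - auto. }
  exists (sgn s2 * c1 + c2). intros x Hx. unfold Defs.comp.
  rewrite Hc2.
  - rewrite Hc1; auto. rewrite sgn_eqb; ring.
  - rewrite Hc1; auto.
Qed.

Lemma endpoints s k n a :
  (forall i, (i < n)%nat -> exists c, forall x : X,
        a i < xval x < a (S i) -> xval (k x) = sgn s * xval x + c) ->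
  forall m, (m <= n)%nat -> exists E, forall i, (i < m)%nat -> exists c,
    (forall x : X, a i < xval x < a (S i) -> xval (k x) = sgn s * xval x + c) /\
    In (sgn s * a i + c) E /\ In (sgn s * a (S i) + c) E.
Proof.
  intros Hp m; induction m; intros Hm.
  - exists nil; intros; lia.
  - destruct (IHm ltac:(lia)) as [E HE]. destruct (Hp m ltac:(lia)) as [c Hc].
    exists (sgn s * a m + c :: sgn s * a (S m) + c :: E). intros i Hi.
    destruct (Nat.eq_dec i m).
    + subst i. exists c. split; auto. split; [left; auto | right; left; auto].
    + destruct (HE i ltac:(lia)) as [c' [Hc1 [Hc2 Hc3]]]. exists c'.
      split; auto. split; right; right; auto.
Qed.

Lemma partS_inv s k ki : inverse_pair k ki -> partS s k -> gapS s ki.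
Proof.
  intros [Hk1 Hk2] (n & a & H0 & Hn & Hinc & Hp).
  destruct (endpoints s k n a Hp n (le_n n)) as [E HE].
  exists (0 :: 1 :: E ++ map (fun z => xval (k (toX z))) (map a (seq 0 (S n)))).
  intros u v Huv Hgap.
  destruct (classic (exists y : X, u < xval y < v)) as [[y0 Hy0] | Hno];
    [ | exists 0; intros x Hx; exfalso; apply Hno; exists x; auto].
  assert (Hside : forall e, In e E -> e <= u \/ v <= e).
  { intros e He. destruct (Rle_lt_dec e u); auto. destruct (Rle_lt_dec v e); auto.
    exfalso; apply (Hgap e); [right; right; apply in_or_app; auto | lra]. }
  set (x0 := ki y0).
  destruct (xb x0) as [Hx0 Hx1]. rewrite <- Hn in Hx1.
  destruct (locate a n H0 Hinc n (le_n n) (xval x0) Hx0 Hx1) as [i [Hi Hai]].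
  assert (Hai' : a i < xval x0).
  { destruct (Req_dec_T (a i) (xval x0)) as [e | ne]; [| lra].
    exfalso. apply (Hgap (xval y0)); [| auto].
    right; right; apply in_or_app; right.
    replace (xval y0) with (xval (k (toX (a i)))).
    - apply (in_map (fun z => xval (k (toX z)))). apply in_map. apply in_seq. lia.
    - f_equal. replace (toX (a i)) with x0. unfold x0; rewrite Hk2; auto.
      apply X_eq. rewrite toX_val; auto. rewrite e; apply xb. }
  destruct (HE i Hi) as [c [Hc [He1 He2]]].
  assert (Hy0c : xval y0 = sgn s * xval x0 + c).
  { rewrite <- Hc; [| lra]. unfold x0; rewrite Hk2; auto. }
  pose proof (Hside _ He1) as S1. pose proof (Hside _ He2) as S2.
  assert (Hai0 : 0 <= a i) by (rewrite <- H0; apply (mono a n Hinc); lia).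
  assert (Hai1 : a (S i) <= 1) by (rewrite <- Hn; apply (mono a n Hinc); lia).
  exists (- sgn s * c). intros y Hy.
  assert (Hz : a i < sgn s * (xval y - c) < a (S i)).
  { destruct s; simpl in *; destruct S1; destruct S2; lra. }
  set (z := sgn s * (xval y - c)) in *.
  assert (Hkz : k (toX z) = y).
  { apply X_eq. rewrite Hc; rewrite toX_val; try lra.
    unfold z; destruct s; simpl; ring. }
  assert (Hki : ki y = toX z) by (rewrite <- Hkz, Hk1; auto).
  rewrite Hki, toX_val by lra. unfold z; destruct s; simpl; ring.
Qed.

Lemma gapS_inv s k ki : inverse_pair k ki -> gapS s k -> gapS s ki.
Proof. intros H1 H2; apply (partS_inv s k ki H1); apply gapS_partS; auto. Qed.

Lemma inv_comp f fi k ki : inverse_pair f fi -> inverse_pair k ki ->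
  inverse_pair (compX f k) (compX ki fi).
Proof. intros [A B] [C D]; split; intros; unfold Defs.comp; rewrite ?A, ?C, ?B, ?D; auto. Qed.

Lemma inv_sym f g : inverse_pair f g -> inverse_pair g f.
Proof. intros [A B]; split; auto. Qed.

Lemma pi_false_partS f : piecewise_isometric false f -> partS true f.
Proof.
  intros (n & a & H0 & Hn & Hinc & Hp). exists n, a. repeat split; auto.
  intros i Hi. destruct (Hp i Hi) as [c [Hc | [Hf _]]]; [| discriminate].
  exists c; intros x Hx; rewrite Hc; auto; simpl; ring.
Qed.

Lemma partS_pi_false f : partS true f -> piecewise_isometric false f.
Proof.
  intros (n & a & H0 & Hn & Hinc & Hp). exists n, a. repeat split; auto.
  intros i Hi. destruct (Hp i Hi) as [c Hc]. exists c; left.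
  intros x Hx; rewrite Hc; auto; simpl; ring.
Qed.

Lemma in_IETplus_gapS f : in_IETplus f -> gapS true f.
Proof.
  intros [h [[_ Hh] Heq]]. apply (gapS_eqfin _ _ h); auto.
  apply partS_gapS, pi_false_partS; auto.
Qed.

Lemma gapS_in_IETplus f : bijection f -> gapS true f -> in_IETplus f.
Proof.
  intros Hb Hg. exists f. split; [split; auto |].
  - apply partS_pi_false, gapS_partS; auto.
  - exists nil; auto.
Qed.

Lemma Rrep_gapS r : is_R_rep r -> gapS false r.
Proof.
  intros [_ [l Hl]]. exists (map xval l). intros u v Huv Hgap. exists 1.
  intros x Hx. rewrite Hl; [simpl; ring |].
  intro Hin; apply (Hgap (xval x)); auto; apply in_map; auto.
Qed.

Lemma backward g : IETbow_hat g -> in_IETpm g -> in_normalizer_IETplus g.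
Proof.
  intros [[gi Hgi] _] Hpm. exists gi. split; auto.
  assert (Hs : exists s, gapS s g).
  { destruct Hpm as [[h [[_ Hh] Heq]] | (r & h & Hr & [[hi Hhi] Hh] & Heq)].
    - exists true. apply (gapS_eqfin _ _ h); auto. apply partS_gapS, pi_false_partS; auto.
    - exists false. apply (gapS_eqfin _ _ (compX r h)); auto.
      apply (gapS_comp true false h hi r); auto.
      apply partS_gapS, pi_false_partS; auto. apply Rrep_gapS; auto. }
  destruct Hs as [s Hs].
  assert (Hsi : gapS s gi) by (apply (gapS_inv s g gi); auto).
  split; intros h [[hi Hhi] Hh]; apply gapS_in_IETplus;
    (assert (Hhs : gapS true h) by (apply partS_gapS, pi_false_partS; auto)).
  - exists (compX (compX g hi) gi). apply inv_comp; [auto | apply inv_comp; [auto | apply inv_sym; auto]].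
  - pose proof (gapS_comp s true gi g h (inv_sym _ _ Hgi) Hsi Hhs) as H1.
    pose proof (gapS_comp _ s (compX h gi) (compX g hi) g
                  (inv_comp _ _ _ _ Hhi (inv_sym _ _ Hgi)) H1 Hs) as H2.
    destruct s; exact H2.
  - exists (compX (compX gi hi) g). apply inv_comp; [apply inv_sym; auto | apply inv_comp; auto].
  - pose proof (gapS_comp s true g gi h Hgi Hs Hhs) as H1.
    pose proof (gapS_comp _ s (compX h g) (compX gi hi) gi
                  (inv_comp _ _ _ _ Hhi Hgi) H1 Hsi) as H2.
    destruct s; exact H2.
Qed.

Definition liftX (F : R -> R) (H : forall y, 0 <= y < 1 -> 0 <= F y < 1) : X -> X :=
  fun x => exist (fun z => 0 <= z < 1) (F (xval x)) (H (xval x) (xb x)).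

Lemma liftX_val F H x : xval (liftX F H x) = F (xval x).
Proof. reflexivity. Qed.

Definition inb (p d y : R) : bool :=
  if Rle_dec p y then if Rlt_dec y (p + d) then true else false else false.

Lemma inb_T p d y : p <= y < p + d -> inb p d y = true.
Proof. intros [H1 H2]; unfold inb; destruct (Rle_dec p y); destruct (Rlt_dec y (p + d));
  auto; contradiction. Qed.

Lemma inb_F p d y : ~ (p <= y < p + d) -> inb p d y = false.
Proof. intros H; unfold inb; destruct (Rle_dec p y); destruct (Rlt_dec y (p + d));
  auto; exfalso; apply H; auto. Qed.

Definition hR p q d y :=
  if inb p d y then y + (q - p) else if inb q d y then y - (q - p) else y.

Lemma hR_I p q d y : p <= y < p + d -> hR p q d y = y + (q - p).
Proof. intros H; unfold hR; rewrite inb_T; auto. Qed.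

Lemma hR_J p q d y : ~ (p <= y < p + d) -> q <= y < q + d -> hR p q d y = y - (q - p).
Proof. intros H H'; unfold hR; rewrite inb_F, inb_T; auto. Qed.

Lemma hR_O p q d y : ~ (p <= y < p + d) -> ~ (q <= y < q + d) -> hR p q d y = y.
Proof. intros H H'; unfold hR; rewrite !inb_F; auto. Qed.

Lemma swap_exists p q d : 0 < d -> 0 <= p -> 0 <= q -> p + d <= 1 -> q + d <= 1 ->
  (p + d <= q \/ q + d <= p) ->
  exists h, IETplus_hat h /\ forall x : X, p <= xval x < p + d -> xval (h x) = xval x + (q - p).
Proof.
  intros Hd Hp Hq Hp1 Hq1 Hdisj.
  assert (HR : forall y, 0 <= y < 1 -> 0 <= hR p q d y < 1).
  { intros y Hy. destruct (classic (p <= y < p + d)) as [I | nI].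
    - rewrite hR_I; auto; lra.
    - destruct (classic (q <= y < q + d)) as [J | nJ].
      + rewrite hR_J; auto; lra.
      + rewrite hR_O; auto. }
  set (h := liftX (hR p q d) HR).
  assert (Hv : forall x, xval (h x) = hR p q d (xval x)) by reflexivity.
  assert (Hinv : forall x, h (h x) = x).
  { intro x. apply X_eq. rewrite !Hv. set (y := xval x).
    destruct (classic (p <= y < p + d)) as [I | nI].
    - rewrite (hR_I _ _ _ y) by auto. rewrite hR_J; [ring | lra | lra].
    - destruct (classic (q <= y < q + d)) as [J | nJ].
      + rewrite (hR_J _ _ _ y) by auto. rewrite hR_I; [ring | lra].
      + rewrite (hR_O _ _ _ y) by auto. rewrite hR_O; auto. }
  exists h. split.
  - split. exists h; split; auto.
    apply partS_pi_false, gapS_partS.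
    exists (p :: p + d :: q :: q + d :: nil). intros u v Huv Hgap.
    assert (Hs : forall e, In e (p :: p + d :: q :: q + d :: nil) -> e <= u \/ v <= e).
    { intros e He. destruct (Rle_lt_dec e u); auto. destruct (Rle_lt_dec v e); auto.
      exfalso; apply (Hgap e); auto; lra. }
    pose proof (Hs p ltac:(simpl; auto)) as S1.
    pose proof (Hs (p + d) ltac:(simpl; auto)) as S2.
    pose proof (Hs q ltac:(simpl; auto)) as S3.
    pose proof (Hs (q + d) ltac:(simpl; auto 6)) as S4.
    set (m := (u + v) / 2).
    assert (Hm : u < m < v) by (unfold m; lra). clearbody m.
    destruct (classic (p <= m < p + d)) as [I | nI].
    + exists (q - p). intros x Hx. rewrite Hv, hR_I; simpl; [ring |].
      destruct S1, S2; lra.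
    + destruct (classic (q <= m < q + d)) as [J | nJ].
      * exists (- (q - p)). intros x Hx. rewrite Hv, hR_J; simpl; [ring | |].
        -- intro; destruct S1, S2, S3, S4; lra.
        -- destruct S3, S4; lra.
      * exists 0. intros x Hx. rewrite Hv, hR_O; simpl; [ring | |].
        -- intro; apply nI; destruct S1, S2; lra.
        -- intro; apply nJ; destruct S3, S4; lra.
  - intros x Hx. rewrite Hv, hR_I; auto.
Qed.

Lemma R_exists : exists r, is_R_rep r /\ (forall x, r (r x) = x) /\
  (forall x, xval x <> 0 -> xval (r x) = 1 - xval x).
Proof.
  set (F := fun y => if Req_dec_T y 0 then 0 else 1 - y).
  assert (HF : forall y, 0 <= y < 1 -> 0 <= F y < 1).
  { intros y Hy; unfold F; destruct (Req_dec_T y 0); lra. }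
  set (r := liftX F HF).
  assert (Hv : forall x, xval x <> 0 -> xval (r x) = 1 - xval x).
  { intros x Hx; unfold r; rewrite liftX_val; unfold F; destruct (Req_dec_T (xval x) 0); tauto. }
  assert (Hinv : forall x, r (r x) = x).
  { intros x; apply X_eq; unfold r; rewrite !liftX_val; unfold F.
    pose proof (xb x).
    destruct (Req_dec_T (xval x) 0) as [e | ne].
    - destruct (Req_dec_T 0 0); lra.
    - destruct (Req_dec_T (1 - xval x) 0); lra. }
  exists r. split; [| split; auto].
  split. exists r; split; auto.
  exists (toX 0 :: nil). intros x Hx. apply Hv. intro E. apply Hx; left.
  apply X_eq. rewrite E, toX_val; lra.
Qed.

Lemma forward g : IETbow_hat g -> in_normalizer_IETplus g -> in_IETpm g.
Proof.
  intros [Hb (n & a & H0 & Hn & Hinc & Hp)] (gi & Hgi & Hc1 & _).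
  assert (Hbd : forall i, (i <= n)%nat -> 0 <= a i <= 1).
  { intros i Hi; split; [rewrite <- H0 | rewrite <- Hn]; apply (mono a n Hinc); lia. }
  destruct (classic (forall i, (i < n)%nat -> exists c, forall x : X,
      a i < xval x < a (S i) -> xval (g x) = xval x + c)) as [Hall | Hnall].
  - left. exists g. split; [split; auto | exists nil; auto].
    exists n, a. repeat split; auto. intros i Hi. destruct (Hall i Hi) as [c Hc].
    exists c; left; auto.
  - destruct (classic (forall i, (i < n)%nat -> exists c, forall x : X,
      a i < xval x < a (S i) -> xval (g x) = - xval x + c)) as [Hall2 | Hnall2].
    + right. destruct R_exists as (r & Hr & Hrr & Hrv).
      exists r, (compX r g). split; auto. split.
      * split.
        -- destruct Hb as [gi' Hgi']. exists (compX gi' r). apply inv_comp; auto. split; auto.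
        -- exists n, a. repeat split; auto. intros i Hi. destruct (Hall2 i Hi) as [c Hc].
           exists (1 - c). left. intros x Hx. unfold Defs.comp.
           pose proof (Hbd i ltac:(lia)). pose proof (Hbd (S i) ltac:(lia)).
           rewrite Hrv.
           ++ rewrite Hc; auto; ring.
           ++ rewrite Hc; auto. intro E.
              set (x' := (xval x + a (S i)) / 2).
              assert (Hx' : a i < x' < a (S i)) by (unfold x'; lra).
              assert (Hv' : xval (toX x') = x') by (apply toX_val; lra).
              pose proof (Hc (toX x') ltac:(rewrite Hv'; lra)) as Hg'.
              pose proof (xb (g (toX x'))). rewrite Hv' in Hg'. unfold x' in *; lra.
      * exists nil. intros x _. unfold Defs.comp. rewrite Hrr; auto.
    + exfalso.
      apply not_all_ex_not in Hnall as [i Hi]. apply imply_to_and in Hi as [Hi Hni].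
      apply not_all_ex_not in Hnall2 as [j Hj]. apply imply_to_and in Hj as [Hj Hnj].
      destruct (Hp i Hi) as [ci [Hci | [_ Hci]]]; [exfalso; apply Hni; exists ci; auto |].
      destruct (Hp j Hj) as [cj [Hcj | [_ Hcj]]]; [| exfalso; apply Hnj; exists cj; auto].
      assert (Hij : i <> j) by (intro; subst; apply Hnj; exists ci; auto).
      pose proof (Hbd i ltac:(lia)). pose proof (Hbd (S i) ltac:(lia)).
      pose proof (Hbd j ltac:(lia)). pose proof (Hbd (S j) ltac:(lia)).
      pose proof (Hinc i Hi). pose proof (Hinc j Hj).
      set (d := Rmin (a (S j) - a j) (a (S i) - a i)).
      assert (Hd1 : d <= a (S j) - a j) by apply Rmin_l.
      assert (Hd2 : d <= a (S i) - a i) by apply Rmin_r.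
      assert (Hd : 0 < d) by (unfold d; apply Rmin_glb_lt; lra).
      assert (Hdisj : a j + d <= a i \/ a i + d <= a j).
      { destruct (Nat.lt_gt_cases i j) as [[Hlt | Hlt] _]; auto.
        - right. pose proof (mono a n Hinc j (S i) ltac:(lia) ltac:(lia)). lra.
        - left. pose proof (mono a n Hinc i (S j) ltac:(lia) ltac:(lia)). lra. }
      destruct (swap_exists (a j) (a i) d Hd ltac:(lra) ltac:(lra) ltac:(lra) ltac:(lra) Hdisj)
        as [h [Hh Hhv]].
      destruct (in_IETplus_gapS _ (Hc1 h Hh)) as [Lf HLf].
      assert (Key : forall y, a j + cj < y < a j + d + cj -> exists Y : X, xval Y = y /\
        xval (compX g (compX h gi) Y) = - (y - cj + a i - a j) + ci).
      { intros y Hy. set (x := y - cj).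
        assert (Hx : a j < x < a j + d) by (unfold x; lra).
        assert (HX0 : xval (toX x) = x) by (apply toX_val; lra).
        exists (g (toX x)). split.
        - rewrite Hcj; rewrite HX0; [unfold x; ring | lra].
        - unfold Defs.comp. rewrite (proj1 Hgi).
          rewrite Hci.
          + rewrite Hhv; rewrite HX0; [unfold x; ring | lra].
          + rewrite Hhv; rewrite HX0; lra. }
      destruct (gap_exists Lf (a j + cj) (a j + d + cj) ltac:(lra))
        as (u' & v' & Hu1 & Hu2 & Hu3 & Hu4).
      destruct (HLf u' v' Hu2 Hu4) as [c Hc].
      destruct (Key ((u' + v') / 2) ltac:(lra)) as [Y1 [E1 F1]].
      destruct (Key ((u' + 3 * v') / 4) ltac:(lra)) as [Y2 [E2 F2]].
      rewrite Hc in F1 by (rewrite E1; lra).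
      rewrite Hc in F2 by (rewrite E2; lra).
      simpl in F1, F2. rewrite E1 in F1. rewrite E2 in F2. lra.
Qed.

Theorem proposition5p1 :
  forall g : X -> X, IETbow_hat g ->
    (in_normalizer_IETplus g <-> in_IETpm g).
Proof.
  intros g Hg; split; [apply forward; auto | apply backward; auto].
Qed.
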